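(* Let $S_j$, $j\in\mathbb{Z}^d$, be local potentials satisfying (A)–(E). Let $(p_1,q_1),\dots,(p_d,q_d)\in\mathbb{Z}^d\times\mathbb{Z}$ be such that $p_1,\dots,p_d$ are linearly independent. Then the periodic action $W_{p,q}:\mathbb{X}_{p,q}\to\mathbb{R}$ attains its minimum on $\mathbb{X}_{p,q}$.
   Context: Notation: $\|i\|=\sum_{k=1}^d|i_k|$ for $i\in\mathbb{Z}^d$, $B_j^r=\{k\in\mathbb{Z}^d:\|k-j\|\le r\}$, and $(\tau_{k,l}x)_i=x_{i+k}+l$ for $(k,l)\in\mathbb{Z}^d\times\mathbb{Z}$, $x\in\mathbb{R}^{\mathbb{Z}^d}$. Local potentials are functions $S_j:\mathbb{R}^{\mathbb{Z}^d}\to\mathbb{R}$, $j\in\mathbb{Z}^d$, with: (A) there is $r\in(0,\infty)$ and $C^2$ functions $s_j:\mathbb{R}^{B_j^r}\to\mathbb{R}$ with $S_j(x)=s_j(x|_{B_j^r})$ (partial derivatives $\partial_{i_1\dots i_m}S_j$ are those of $s_j$, and zero if some index lies outside $B_j^r$); (B) $S_j(\tau_{k,l}x)=S_{j+k}(x)$ for all $j,k,l$; (C) each $S_j$ is bounded below and $S_j(x)\to\infty$ as $|x_k-x_j|\to\infty$ for every $k$ with $\|k-j\|=1$; (D) $\partial_{i,k}S_j\le 0$ for all $j$ and $i\ne k$, and $\partial_{i,k}S_i<0$ whenever $\|i-k\|=1$; (E) there is $C$ with $|\partial_{i,k}S_j|\le C$ for all $i,j,k$. Let $p$ denote the $d\times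 d$ integer matrix with columns $p_1,\dots,p_d$, $B_p=p([0,1)^d)\cap\mathbb{Z}^d$, $\mathbb{X}_{p,q}=\{x\in\mathbb{R}^{\mathbb{Z}^d}:\tau_{p_j,q_j}x=x,\ j=1,\dots,d\}$, and $W_{p,q}(x)=\sum_{j\in B_p}S_j(x)$ for $x\in\mathbb{X}_{p,q}$. A minimizer of $W_{p,q}$ on $\mathbb{X}_{p,q}$ is called a $p,q$-minimizer. *)

(* Defs.v *)
From mathcomp Require Import ssreflect ssrfun ssrbool eqtype ssrnat seq choice fintype finfun bigop.
From Stdlib Require Import Reals ZArith ClassicalEpsilon.

Set Implicit Arguments.
Unset Strict Implicit.
Unset Printing Implicit Defensive.

Definition point (d : nat) := 'I_d -> Z.
Definition config (d : nat) := point d -> R.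

Definition padd {d} (i k : point d) : point d := fun m => (i m + k m)%Z.
Definition psub {d} (i k : point d) : point d := fun m => (i m - k m)%Z.

Definition pt_eqb {d} (i k : point d) : bool := [forall m : 'I_d, Z.eqb (i m) (k m)].

Definition pnorm {d} (i : point d) : Z := (\big[Z.add/0%Z]_(m < d) Z.abs (i m))%Z.

Definition inBall {d} (j : point d) (r : R) (k : point d) : Prop :=
  (IZR (pnorm (psub k j)) <= r)%R.

Definition tau {d} (k : point d) (l : Z) (x : config d) : config d :=
  fun i => (x (padd i k) + IZR l)%R.

Definition upd {d} (x : config d) (i : point d) (t : R) : config d :=
  fun k => if pt_eqb k i then t else x k.

Definition cont_in {d} (B : point d -> Prop) (f : config d -> R) : Prop :=
  forall (x : config d) (eps : R), (0 < eps)%R ->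
    exists delta : R, (0 < delta)%R /\
      forall y : config d, (forall k, B k -> (Rabs (y k - x k) < delta)%R) ->
        (Rabs (f y - f x) < eps)%R.

Definition is_partial {d} (f : config d -> R) (i : point d) (x : config d) (l : R) : Prop :=
  derivable_pt_lim (fun t => f (upd x i t)) (x i) l.

Definition is_partial2 {d} (f : config d -> R) (i k : point d) (x : config d) (l : R) : Prop :=
  exists g : config d -> R, (forall y, is_partial f k y (g y)) /\ is_partial g i x l.

Definition C2_in {d} (B : point d -> Prop) (f : config d -> R) : Prop :=
  cont_in B f /\
  exists (D1 : point d -> config d -> R) (D2 : point d -> point d -> config d -> R),
    (forall i x, is_partial f i x (D1 i x)) /\
    (forall i, cont_in B (D1 i)) /\
    (forall i k x, is_partial (D1 k) i x (D2 i k x)) /\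
    (forall i k, cont_in B (D2 i k)).

Definition condA {d} (S : point d -> config d -> R) : Prop :=
  exists r : R, (0 < r)%R /\
    forall j : point d,
      (forall x y : config d, (forall k, inBall j r k -> x k = y k) -> S j x = S j y) /\
      C2_in (inBall j r) (S j).

Definition condB {d} (S : point d -> config d -> R) : Prop :=
  forall (j k : point d) (l : Z) (x : config d), S j (tau k l x) = S (padd j k) x.

Definition condC {d} (S : point d -> config d -> R) : Prop :=
  forall j : point d,
    (exists m : R, forall x, (m <= S j x)%R) /\
    (forall k : point d, pnorm (psub k j) = 1%Z ->
       forall M : R, exists R0 : R, forall x : config d,
         (R0 < Rabs (x k - x j))%R -> (M < S j x)%R).

Definition condD {d} (S : point d -> config d -> R) : Prop :=
  (forall (j i k : point d) (x : config d) (l : R),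
      i <> k -> is_partial2 (S j) i k x l -> (l <= 0)%R) /\
  (forall (i k : point d) (x : config d) (l : R),
      pnorm (psub i k) = 1%Z -> is_partial2 (S i) i k x l -> (l < 0)%R).

Definition condE {d} (S : point d -> config d -> R) : Prop :=
  exists C : R, forall (i j k : point d) (x : config d) (l : R),
    is_partial2 (S j) i k x l -> (Rabs l <= C)%R.

(* p : columns p_1..p_d of an integer d x d matrix; column l is p l,
   its k-th entry is p l k. *)
Definition lin_indep {d} (p : 'I_d -> point d) : Prop :=
  forall c : 'I_d -> R,
    (forall k : 'I_d, (\big[Rplus/0%R]_(l < d) (c l * IZR (p l k)))%R = 0%R) ->
    forall l, c l = 0%R.

Definition inBp {d} (p : 'I_d -> point d) (j : point d) : Prop :=
  exists t : 'I_d -> R, (forall l, 0 <= t l < 1)%R /\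
    forall k : 'I_d, IZR (j k) = (\big[Rplus/0%R]_(l < d) (IZR (p l k) * t l))%R.

Definition inX {d} (p : 'I_d -> point d) (q : 'I_d -> Z) (x : config d) : Prop :=
  forall l : 'I_d, forall i, tau (p l) (q l) x i = x i.

(* A box [-M, M]^d containing B_p, with M = sum of |entries of p|. *)
Definition boxM {d} (p : 'I_d -> point d) : nat :=
  Z.to_nat (\big[Z.add/0%Z]_(l < d) \big[Z.add/0%Z]_(k < d) Z.abs (p l k))%Z.

Definition boxpt {d} (M : nat) (f : {ffun 'I_d -> 'I_(M.*2.+1)}) : point d :=
  fun k => (Z.of_nat (nat_of_ord (f k)) - Z.of_nat M)%Z.

(* W_{p,q}(x) = sum_{j in B_p} S_j(x), computed as the sum over the box
   [-M,M]^d (which contains B_p) of the indicator of B_p times S_j(x). *)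
Definition Wp {d} (p : 'I_d -> point d) (S : point d -> config d -> R) (x : config d) : R :=
  (\big[Rplus/0%R]_(f : {ffun 'I_d -> 'I_((boxM p).*2.+1)})
     (if excluded_middle_informative (inBp p (boxpt f)) then S (boxpt f) x else 0%R))%R.

(* Main.v *)
Require Import Defs.
From mathcomp Require Import ssreflect ssrfun ssrbool eqtype ssrnat seq choice fintype finfun bigop.
From Stdlib Require Import Reals ZArith ClassicalEpsilon.
From HB Require Import structures.
From mathcomp Require Import all_boot all_order all_algebra.
From mathcomp Require Import all_classical all_reals all_analysis.
From mathcomp Require Import Rstruct Rstruct_topology.
From Stdlib Require Import Reals ZArith ClassicalEpsilon Lra Lia FunctionalExtensionality Classical.
Import ArrowAsProduct.

Unset Printing Implicit Defensive.

HB.instance Definition _ := Monoid.isComLaw.Build Z 0%Z Z.add Z.add_assoc Z.add_comm Z.add_0_l.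

Section Pt.
Context {d : nat}.
Local Notation pt := (Defs.point d).

Lemma zsum_ge0 (P : pred 'I_d) (F : 'I_d -> Z) :
  (forall m, (0 <= F m)%Z) -> (0 <= \big[Z.add/0%Z]_(m < d | P m) F m)%Z.
Proof. move=> H; apply: (big_ind (fun z => (0 <= z)%Z)); [lia| move=> *; lia|done]. Qed.

Lemma pnorm_term (i : pt) m : (Z.abs (i m) <= pnorm i)%Z.
Proof.
rewrite /pnorm (bigD1 m) //=.
apply/Z.le_sub_le_add_l; rewrite Z.sub_diag; apply: zsum_ge0 => j; exact: Z.abs_nonneg.
Qed.

Lemma pnorm_ge0 (i : pt) : (0 <= pnorm i)%Z.
Proof. exact: (@zsum_ge0 xpredT (fun j => Z.abs (i j)) (fun j => Z.abs_nonneg _)). Qed.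

Lemma pnorm0 (i : pt) : pnorm i = 0%Z -> forall m, i m = 0%Z.
Proof. move=> H m; have := pnorm_term i m; have := Z.abs_nonneg (i m); lia. Qed.

Lemma pnorm_neighbor (i : pt) : (0 < pnorm i)%Z ->
  exists i' : pt, pnorm i' = (pnorm i - 1)%Z /\ pnorm (psub i i') = 1%Z.
Proof.
move=> H.
have [m Hm] : exists m, i m <> 0%Z.
  apply: NNPP => hn. have: pnorm i = 0%Z.
    rewrite /pnorm big1 // => j _. have: i j = 0%Z by apply: NNPP => h; apply: hn; exists j.
    by move=> ->.
  lia.
exists (fun k => if k == m then (i m - Z.sgn (i m))%Z else i k); split.
- rewrite /pnorm (bigD1 m) //= [in RHS](bigD1 m) //= eqxx.
  rewrite (eq_bigr (fun j => Z.abs (i j))); last by move=> j /negbTE ->.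
  have : (Z.abs (i m - Z.sgn (i m)) = Z.abs (i m) - 1)%Z.
    case: (Z.lt_total (i m) 0) => [h|[h|h]]; first (rewrite Z.sgn_neg //; lia).
      by [].
    rewrite Z.sgn_pos //; lia.
  lia.
- rewrite /pnorm /psub (bigD1 m) //= eqxx big1 => [|j /negbTE ->]; last by rewrite Z.sub_diag.
  have : (Z.abs (i m - (i m - Z.sgn (i m))) = 1)%Z.
    case: (Z.lt_total (i m) 0) => [h|[h|h]]; first (rewrite Z.sgn_neg //; lia).
      by [].
    rewrite Z.sgn_pos //; lia.
  lia.
Qed.

End Pt.

Section Tau.
Context {d : nat}.
Local Notation pt := (Defs.point d).

Definition pzero : pt := fun _ => 0%Z.
Definition popp (k : pt) : pt := fun m => (- k m)%Z.

Lemma tau_comp (k k' : pt) l l' (x : config d) :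
  tau k l (tau k' l' x) = tau (padd k k') (l + l') x.
Proof.
apply: functional_extensionality => i; rewrite /tau /padd plus_IZR.
have -> : (fun m => (i m + k m + k' m)%Z) = (fun m => (i m + (k m + k' m))%Z).
  by apply: functional_extensionality => m; lia.
lra.
Qed.

Lemma tau00 (x : config d) : tau pzero 0 x = x.
Proof.
apply: functional_extensionality => i; rewrite /tau /padd /pzero /=.
have -> : (fun m => (i m + 0)%Z) = i by apply: functional_extensionality => m; lia.
lra.
Qed.

Lemma tau_ext (k k' : pt) l l' x : (forall m, k m = k' m) -> l = l' -> tau k l x = tau k' l' x.
Proof. by move=> h <-; have -> : k = k' by apply: functional_extensionality. Qed.

Section Inv.
Variable x : config d.
Definition Inv k l := tau k l x = x.

Lemma Inv_ext k l k' l' : (forall m, k m = k' m) -> l = l' -> Inv k l -> Inv k' l'.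
Proof. by rewrite /Inv => h e; rewrite (tau_ext k k' l l' x h e). Qed.
Lemma Inv0 : Inv pzero 0. Proof. exact: tau00. Qed.
Lemma InvD k l k' l' : Inv k l -> Inv k' l' -> Inv (padd k k') (l + l').
Proof. by rewrite /Inv => h h'; rewrite -tau_comp h' h. Qed.
Lemma InvN k l : Inv k l -> Inv (popp k) (- l).
Proof.
rewrite /Inv => h; rewrite -{1}h tau_comp -{2}(tau00 x); apply: tau_ext => [m|].
  by rewrite /padd /popp /pzero; lia.
lia.
Qed.
Lemma InvZ k l n : Inv k l -> Inv (fun m => (n * k m)%Z) (n * l).
Proof.
move=> h.
have pos : forall nn : nat, Inv (fun m => (Z.of_nat nn * k m)%Z) (Z.of_nat nn * l).
  elim=> [|nn IH].
    by apply: (Inv_ext _ _ _ _ _ _ Inv0) => [m|] /=.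
  apply: (Inv_ext _ _ _ _ _ _ (InvD _ _ _ _ IH h)) => [m|]; rewrite /padd; lia.
case: (Z.le_gt_cases 0 n) => hn.
  have := pos (Z.to_nat n); rewrite Z2Nat.id //.
apply: (Inv_ext _ _ _ _ _ _ (InvN _ _ (pos (Z.to_nat (- n))))) => [m|]; rewrite /popp ?Z2Nat.id; lia.
Qed.

Lemma Inv_sum (I : Type) (s : seq I) (K : I -> pt) (L : I -> Z) :
  (forall i, Inv (K i) (L i)) ->
  Inv (fun m => \big[Z.add/0%Z]_(i <- s) K i m) (\big[Z.add/0%Z]_(i <- s) L i).
Proof.
move=> h; elim: s => [|a s IH].
  by apply: (Inv_ext _ _ _ _ _ _ Inv0) => [m|]; rewrite big_nil.
by apply: (Inv_ext _ _ _ _ _ _ (InvD _ _ _ _ (h a) IH)) => [m|]; rewrite big_cons.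
Qed.
End Inv.

Definition plin (p : 'I_d -> pt) (n : 'I_d -> Z) : pt :=
  fun k => \big[Z.add/0%Z]_(l < d) (n l * p l k)%Z.
Definition qlin (q : 'I_d -> Z) (n : 'I_d -> Z) : Z := \big[Z.add/0%Z]_(l < d) (n l * q l)%Z.

Lemma inX_Inv p q x n : inX p q x -> Inv x (plin p n) (qlin q n).
Proof.
move=> hx; rewrite /plin /qlin.
apply: (Inv_sum x _ _ (fun l m => (n l * p l m)%Z) (fun l => (n l * q l)%Z)) => l.
apply: InvZ; rewrite /Inv; apply: functional_extensionality => i; exact: hx.
Qed.

Lemma S_periodic (S : pt -> config d -> R) (hB : condB S) p q x n j :
  inX p q x -> S (padd j (plin p n)) x = S j x.
Proof. by move=> hx; rewrite -(hB j (plin p n) (qlin q n) x) (inX_Inv p q x n hx). Qed.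

End Tau.

Section LA.
Context {d : nat}.
Variable p : 'I_d -> Defs.point d.
Hypothesis hp : lin_indep p.

Local Open Scope ring_scope.

Definition Amx : 'M[R]_d := \matrix_(l, k) IZR (p l k).

Lemma Amx_unit : Amx \in unitmx.
Proof.
rewrite -row_free_unit -kermx_eq0; apply/eqP/matrixP => i j; rewrite [in RHS]mxE.
have h2 : forall k, \big[Rplus/0%R]_(l < d) (kermx Amx i l * IZR (p l k))%R = 0%R.
  move=> k; have := congr1 (fun M : 'M[R]_d => M i k) (mulmx_ker Amx).
  rewrite !mxE => H; apply: (etrans _ H); apply: eq_bigr => l _; rewrite [Amx l k]mxE; done.
exact: (hp (fun l => kermx Amx i l) h2 j).
Qed.

Lemma solve_row (v : 'I_d -> R) : exists t : 'I_d -> R,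
  forall k, \big[Rplus/0%R]_(l < d) (t l * IZR (p l k))%R = v k.
Proof.
exists (fun l => ((\row_k v k) *m invmx Amx) 0 l) => k.
have := congr1 (fun M : 'rV[R]_d => M 0 k) (mulmxKV Amx_unit (\row_k v k)).
rewrite !mxE => H; apply: (etrans _ H); apply: eq_bigr => l _; by rewrite !mxE.
Qed.

Lemma solve_col (w : 'I_d -> R) : exists a : 'I_d -> R,
  forall l, \big[Rplus/0%R]_(k < d) (IZR (p l k) * a k)%R = w l.
Proof.
exists (fun k => (invmx Amx *m (\col_l w l)) k 0) => l.
have := congr1 (fun M : 'cV[R]_d => M l 0) (mulKVmx Amx_unit (\col_l w l)).
rewrite !mxE => H; apply: (etrans _ H); apply: eq_bigr => k _; by rewrite !mxE.
Qed.

End LA.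

Section Box.
Context {d : nat}.
Local Notation pt := (Defs.point d).

Lemma box_cover N (v : pt) : (forall m, (Z.abs (v m) <= Z.of_nat N)%Z) ->
  exists f : {ffun 'I_d -> 'I_(N.*2.+1)}, boxpt f = v.
Proof.
move=> hv; exists [ffun m => inord (Z.to_nat (v m + Z.of_nat N))].
apply: functional_extensionality => m; rewrite /boxpt ffunE inordK.
  move: (hv m) => h; rewrite Z2Nat.id; lia.
rewrite ltnS -addnn; apply/leP; have := hv m; rewrite /addn /addn_rec; lia.
Qed.

Lemma IZR_zsum (I : Type) (s : seq I) (F : I -> Z) :
  IZR (\big[Z.add/0%Z]_(i <- s) F i) = \big[Rplus/0%R]_(i <- s) IZR (F i).
Proof. by apply: (big_morph IZR plus_IZR). Qed.

Lemma Rsum_sub (I : Type) (s : seq I) (F G : I -> R) :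
  \big[Rplus/0%R]_(i <- s) (F i - G i)%R =
  (\big[Rplus/0%R]_(i <- s) F i - \big[Rplus/0%R]_(i <- s) G i)%R.
Proof.
apply: (big_rec3 (fun a b c => a = b - c)%R); first by lra.
by move=> i a b c _ ->; lra.
Qed.

Lemma Bp_in_box (p : 'I_d -> pt) j : inBp p j -> forall k, (Z.abs (j k) <= Z.of_nat (boxM p))%Z.
Proof.
case=> t [ht hj] k.
have h1 : (Rabs (IZR (j k)) <= IZR (\big[Z.add/0%Z]_(l < d) Z.abs (p l k)))%R.
  rewrite hj IZR_zsum.
  apply: (big_ind2 (fun a b => Rabs a <= b)%R).
  - rewrite Rabs_R0; lra.
  - move=> a b a' b' h h'; have := Rabs_triang a a'; lra.
  - move=> l _; rewrite Rabs_mult -abs_IZR (Rabs_pos_eq (t l)); last by have := ht l; lra.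
    have := ht l; have := IZR_le _ _ (Z.abs_nonneg (p l k)); nra.
have h2 : (\big[Z.add/0%Z]_(l < d) Z.abs (p l k) <= Z.of_nat (boxM p))%Z.
  rewrite /boxM Z2Nat.id; last first.
    apply: (big_ind (fun z => (0 <= z)%Z)); [lia| move=> *; lia| move=> l _].
    exact: pnorm_ge0.
  apply: (big_ind2 (fun a b => (a <= b)%Z)); [lia| move=> *; lia| move=> l _].
  exact: pnorm_term.
rewrite -abs_IZR in h1; have := le_IZR _ _ h1; lia.
Qed.

Lemma fund_dom (p : 'I_d -> pt) : lin_indep p -> forall j : pt,
  exists n : 'I_d -> Z, inBp p (psub j (plin p n)).
Proof.
move=> hp j; have [t ht] := solve_row p hp (fun k => IZR (j k)).
exists (fun l => (up (t l) - 1)%Z).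
exists (fun l => t l - IZR (up (t l) - 1))%R; split.
  move=> l; have [h1 h2] := archimed (t l); rewrite minus_IZR; lra.
move=> k; rewrite /psub /plin minus_IZR IZR_zsum -ht -Rsum_sub.
apply: eq_bigr => l _; rewrite mult_IZR; lra.
Qed.

End Box.

Section Bounds.
Context {d : nat}.
Local Notation pt := (Defs.point d).
Variable S : pt -> config d -> R.
Hypothesis hB : condB S.
Hypothesis hC : condC S.
Variables (p : 'I_d -> pt) (q : 'I_d -> Z).
Hypothesis hp : lin_indep p.

Local Notation BT := {ffun 'I_d -> 'I_((boxM p).*2.+1)}.

Definition Gt (f : BT) (x : config d) : R :=
  if excluded_middle_informative (inBp p (boxpt f)) then S (boxpt f) x else 0%R.

Lemma Wp_Gt x : Wp p S x = \big[Rplus/0%R]_(f : BT) Gt f x.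
Proof. by []. Qed.

Lemma S_bound_all c : exists C, forall x, inX p q x -> (Wp p S x <= c)%R ->
  forall j, (S j x <= C)%R.
Proof.
have [m hm] : exists m : pt -> R, forall j x, (m j <= S j x)%R.
  apply: (ClassicalEpsilon.choice (fun j mj => forall x, (mj <= S j x)%R)) => j.
  by have [h _] := hC j.
pose lb (f : BT) := if excluded_middle_informative (inBp p (boxpt f)) then m (boxpt f) else 0%R.
have hlb : forall f x, (lb f <= Gt f x)%R.
  move=> f x; rewrite /lb /Gt; case: excluded_middle_informative => h /=; [exact: hm|lra].
exists (c + \big[Rplus/0%R]_(f : BT) Rabs (lb f))%R => x hx hW j.
have [n hn] := fund_dom p hp j.
set j' := psub j (plin p n) in hn.
have ej : padd j' (plin p n) = j.
  by apply: functional_extensionality => k; rewrite /j' /padd /psub; lia.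
rewrite -ej (S_periodic S hB p q x n j' hx).
have [f0 hf0] := box_cover (boxM p) j' (Bp_in_box p j' hn).
have eG : Gt f0 x = S j' x.
  by rewrite /Gt; case: excluded_middle_informative => h /=; [rewrite hf0 | exfalso; apply: h; rewrite hf0].
move: hW; rewrite Wp_Gt (bigD1 f0) //= (bigD1 f0 (F := fun f => Rabs (lb f))) //= eG.
set A := (X in (_ + X <= c)%R -> _). set B := (X in _ -> (_ <= c + (_ + X))%R).
have h1 : (- B <= A)%R.
  rewrite /A /B; apply: (big_ind2 (fun a b => - a <= b)%R); [lra | move=> *; lra | move=> f _].
  have := hlb f x; have := Rle_abs (- lb f); rewrite Rabs_Ropp; lra.
have := Rabs_pos (lb f0); lra.
Qed.

Lemma coord_bound c (i : pt) : exists B, forall x, inX p q x -> (Wp p S x <= c)%R ->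
  (0 <= x (fun _ => 0%Z) <= 1)%R -> (Rabs (x i) <= B)%R.
Proof.
have [C hCb] := S_bound_all c.
suff H : forall n : nat, forall i : pt, pnorm i = Z.of_nat n -> exists B, forall x, inX p q x -> (Wp p S x <= c)%R ->
  (0 <= x (fun _ => 0%Z) <= 1)%R -> (Rabs (x i) <= B)%R.
  by apply: (H (Z.to_nat (pnorm i))); rewrite Z2Nat.id //; apply: pnorm_ge0.
elim=> [|n IH] {}i hi.
  have -> : i = (fun _ => 0%Z) by apply: functional_extensionality => m; apply: pnorm0.
  exists 1%R => x _ _ h; rewrite Rabs_pos_eq; lra.
have [i' [hi'1 hi'2]] := pnorm_neighbor i (ltac:(lia)).
have [B' hB'] := IH i' (ltac:(lia)).
have [_ hC2] := hC i'.
have [R0 hR0] := hC2 i hi'2 C.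
exists (B' + R0)%R => x hx hW h0.
have := hB' x hx hW h0.
have : (Rabs (x i - x i') <= R0)%R.
  apply: Rnot_lt_le => hh; have := hR0 x hh; have := hCb x hx hW i'; lra.
move=> h1 h2; have e : x i = ((x i - x i') + x i')%R by ring.
rewrite e; have := Rabs_triang (x i - x i') (x i'); lra.
Qed.

End Bounds.
Module Topo.
Import Order.TTheory GRing.Theory Num.Theory.
Import numFieldNormedType.Exports.

Section Topo.
Local Open Scope classical_set_scope.
Local Open Scope ring_scope.
Variables (K : realType) (I : eqType).
Local Notation CT := (prod_topology (fun _ : I => K)).

Lemma near_coords (x : CT) (L : seq I) (delta : K) : 0 < delta ->
  \forall y \near x, forall k, k \in L -> `|y k - x k| < delta.
Proof.
move=> hd; elim: L => [|k L IH].
  by apply: (nearW (nbhs_filter x)) => y k; rewrite in_nil.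
have hk : \forall y \near x, `|y k - x k| < delta.
  have pc : ((fun y : CT => y k) @ x --> x k) := @proj_continuous I (fun _ => K) k x.
  have := iffLR (@cvgrPdist_lt _ _ _ _ (nbhs_filter x) (fun y : CT => y k) (x k)) pc delta hd.
  by apply: (@filterS _ _ (nbhs_filter x)) => y; rewrite distrC.
apply: (filterS2 (nbhs_filter x) _ hk IH) => y h1 h2 k'; rewrite in_cons => /orP [/eqP -> //|]; exact: h2.
Qed.

Lemma cont_of_local (f : CT -> K) (L : seq I) :
  (forall x eps, 0 < eps -> exists2 delta, 0 < delta &
     forall y, (forall k, k \in L -> `|y k - x k| < delta) -> `|f y - f x| < eps) ->
  continuous f.
Proof.
move=> hf x; apply/(@cvgrPdist_lt _ _ _ _ (nbhs_filter x)) => eps heps.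
have [delta hd hdelta] := hf x eps heps.
near=> y; rewrite distrC; apply: hdelta; near: y; exact: near_coords.
Unshelve. all: by end_near.
Qed.

Lemma cont_sum (J : Type) (s : seq J) (F : J -> CT -> K) :
  (forall j, continuous (F j)) -> continuous (fun x : CT => \sum_(j <- s) F j x).
Proof.
move=> hF; elim: s => [|a s IH].
  have -> : (fun x : CT => \sum_(j <- [::]) F j x) = (fun _ => 0) by apply: funext => x; rewrite big_nil.
  exact: cst_continuous.
have -> : (fun x : CT => \sum_(j <- a :: s) F j x) = (F a + (fun x => \sum_(j <- s) F j x)).
  by apply: funext => x; rewrite big_cons.
by move=> x; apply: continuousD; [exact: hF | exact: IH].
Qed.

Lemma closed_eq_coords (T : Type) (a b : T -> I) (c : T -> K) :
  closed [set x : CT | forall t, x (a t) + c t = x (b t)].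
Proof.
have -> : [set x : CT | forall t, x (a t) + c t = x (b t)] =
          \bigcap_(t in setT) ((fun x : CT => x (a t) + c t - x (b t)) @^-1` [set 0]).
  apply/seteqP; split => x /=.
    by move=> h t _ /=; rewrite h subrr.
  by move=> h t; have /= /eqP := h t Logic.I; rewrite subr_eq0 => /eqP.
apply: closed_bigI => t _.
have hc' : continuous ((fun x : CT => x (a t)) + (fun _ => c t) - (fun x : CT => x (b t))).
  move=> x; apply: continuousB; last exact: proj_continuous.
  apply: continuousD; [exact: proj_continuous | exact: cst_continuous].
have hc : continuous (fun x : CT => x (a t) + c t - x (b t)) := hc'.
move/continuous_closedP : hc; apply; exact: closed_eq.
Qed.

Lemma closed_le_fun (W : CT -> K) (c : K) : continuous W -> closed [set x : CT | W x <= c].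
Proof. by move/continuous_closedP => h; apply: (h [set y | y <= c]); exact: closed_le. Qed.

Lemma closed_coord_itv (a : I) (lo hi : K) : closed [set x : CT | lo <= x a <= hi].
Proof.
have hc : continuous (fun x : CT => x a) by move=> x; exact: proj_continuous.
move/continuous_closedP : hc => /(_ `[lo, hi]%classic) h.
have -> : [set x : CT | lo <= x a <= hi] = (fun x : CT => x a) @^-1` `[lo, hi].
  by apply/seteqP; split => x /=; rewrite in_itv.
by apply: h; exact: interval_closed.
Qed.

Lemma topo_min (W : CT -> K) (C : set CT) (B : I -> K) (x0 : CT) :
  continuous W -> closed C -> (forall x, C x -> forall i, `|x i| <= B i) -> C x0 ->
  exists2 xm, C xm & forall y, C y -> W xm <= W y.
Proof.
move=> hW hC hB h0.
have cP : compact.compact [set x : CT | forall i, `[- B i, B i]%classic (x i)].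
  have t := (@tychonoff I (fun _ => K) (fun i => `[- B i, B i]%classic) (fun i => @segment_compact K (- B i) (B i))).
  exact: t.
have eC : C = [set x : CT | forall i, `[- B i, B i]%classic (x i)] `&` C.
  apply/seteqP; split => x; last by case.
  move=> hx; split => // i /=; rewrite in_itv /= -ler_norml; exact: hB.
have cC : compact.compact C by rewrite eC; apply: compact_closedI.
have [xm hxm hmin] := compact_EVT_min (ex_intro _ x0 h0) cC (continuous_subspaceT hW).
exists xm; first by move: hxm; rewrite inE.
by move=> y hy; apply: hmin; rewrite inE.
Qed.

End Topo.

End Topo.
Import Topo.

Lemma pt_eqP (d : nat) : Equality.axiom (@pt_eqb d).
Proof.
move=> i k; apply: (iffP forallP) => [h|->].
  apply: functional_extensionality => m; exact/Z.eqb_spec.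
by move=> m; apply/Z.eqb_spec.
Qed.

HB.instance Definition _ (d : nat) := hasDecEq.Build (Defs.point d) (@pt_eqP d).

Section Main.
Context {d : nat}.
Local Notation pt := (Defs.point d).
Local Notation CT := (prod_topology (fun _ : Defs.point d => R)).

Lemma ball_list (j : pt) (r : R) : (0 < r)%R ->
  exists L : seq pt, forall k, inBall j r k -> k \in L.
Proof.
move=> hr; set N := Z.to_nat (up r).
have [hu1 hu2] := archimed r.
have hup : (0 < up r)%Z by apply: lt_IZR; lra.
exists [seq padd (boxpt f) j | f <- enum {ffun 'I_d -> 'I_(N.*2.+1)}] => k hk.
have [f hf] : exists f : {ffun 'I_d -> 'I_(N.*2.+1)}, boxpt f = psub k j.
  apply: box_cover => m; have := pnorm_term (psub k j) m.
  move: hk; rewrite /inBall => hk h.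
  have h2 : (IZR (Z.abs (psub k j m)) < IZR (up r))%R.
    have := IZR_le _ _ h; lra.
  have := lt_IZR _ _ h2; rewrite /N; lia.
apply/mapP; exists f; first by rewrite mem_enum.
by rewrite hf; apply: functional_extensionality => m; rewrite /padd /psub; lia.
Qed.

Lemma S_cont (S : pt -> config d -> R) (hA : condA S) (j : pt) :
  continuous (S j : CT -> R).
Proof.
have [r [hr hS]] := hA.
have [_ [hc _]] := hS j.
have [L hL] := ball_list j r hr.
apply: (@cont_of_local R _ _ L) => x eps /RltP heps.
have [delta [hd hdelta]] := hc x eps heps.
exists delta; first exact/RltP.
move=> y hy; apply/RltP; apply: hdelta => k hk; apply/RltP; exact: hy k (hL k hk).
Qed.

Lemma W_cont (S : pt -> config d -> R) (hA : condA S) (p : 'I_d -> pt) :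
  continuous (Wp p S : CT -> R).
Proof.
have hG : forall f, continuous (Gt S p f : CT -> R).
  move=> f; rewrite /Gt; case: excluded_middle_informative => h /=.
    exact: S_cont.
  exact: cst_continuous.
have := @cont_sum R _ _ (index_enum {ffun 'I_d -> 'I_((boxM p).*2.+1)}) (Gt S p) hG.
by [].
Qed.

Definition pz : pt := fun _ => 0%Z.
Definition shift (y : config d) : config d := tau pzero (1 - up (y pz)) y.

Lemma padd0 (i : pt) : padd i pzero = i.
Proof. by apply: functional_extensionality => m; rewrite /padd /pzero; lia. Qed.

Lemma shift_val (y : config d) i : shift y i = (y i + IZR (1 - up (y pz)))%R.
Proof. by rewrite /shift /tau padd0. Qed.

Lemma shift_inX p q y : inX p q y -> inX p q (shift y).
Proof.
move=> hy l i; rewrite /tau !shift_val.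
have := hy l i; rewrite /tau => h; lra.
Qed.

Lemma shift_W (S : pt -> config d -> R) (hB : condB S) p y : Wp p S (shift y) = Wp p S y.
Proof.
rewrite !Wp_Gt; apply: eq_bigr => f _; rewrite /Gt.
case: excluded_middle_informative => h //=.
by rewrite /shift hB padd0.
Qed.

Lemma shift_pz y : (0 <= shift y pz < 1)%R.
Proof.
rewrite shift_val minus_IZR; have [h1 h2] := archimed (y pz); lra.
Qed.

End Main.

Theorem mainTheorem3 (d : nat) (S : Defs.point d -> config d -> R)
  (hA : condA S) (hB : condB S) (hC : condC S) (hD : condD S) (hE : condE S)
  (p : 'I_d -> Defs.point d) (q : 'I_d -> Z) (hp : lin_indep p) :
  exists x : config d, inX p q x /\
    forall y : config d, inX p q y -> (Wp p S x <= Wp p S y)%R.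
Proof.
have [a ha] := solve_col p hp (fun l => IZR (q l)).
pose x0 : config d := fun i => (- \big[Rplus/0%R]_(k < d) (IZR (i k) * a k))%R.
have hx0 : inX p q x0.
  move=> l i; rewrite /tau /x0 /padd -(ha l).
  have -> : \big[Rplus/0%R]_(k < d) (IZR (i k + p l k) * a k)%R =
            (\big[Rplus/0%R]_(k < d) (IZR (i k) * a k) + \big[Rplus/0%R]_(k < d) (IZR (p l k) * a k))%R.
    rewrite -big_split /=; apply: eq_bigr => k _; rewrite plus_IZR; ring.
  ring.
set x1 := shift x0.
set c := Wp p S x1.
have [B hBd] : exists B : Defs.point d -> R, forall i x, inX p q x -> (Wp p S x <= c)%R ->
    (0 <= x (fun _ => 0%Z) <= 1)%R -> (Rabs (x i) <= B i)%R.
  apply: (ClassicalEpsilon.choice (fun i Bi => forall x, inX p q x -> (Wp p S x <= c)%R ->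
    (0 <= x (fun _ => 0%Z) <= 1)%R -> (Rabs (x i) <= Bi)%R)) => i.
  exact: coord_bound S hB hC p q hp c i.
pose C : set (prod_topology (fun _ : Defs.point d => R)) :=
  fun x => inX p q x /\ (Wp p S x <= c)%R /\ (0 <= x pz <= 1)%R.
have hCcl : closed C.
  have -> : C = ([set x : prod_topology (fun _ : Defs.point d => R) |
        forall t : 'I_d * Defs.point d, (x (padd t.2 (p t.1)) + IZR (q t.1))%R = x t.2]
      `&` [set x | Order.le (Wp p S x) c] `&` [set x | Order.le (0:R) (x pz) && Order.le (x pz) (1:R)])%classic.
    apply/seteqP; split => x /=.
      case=> [h1 [h2 h3]]; split; [split|].
      - by move=> [l i]; exact: h1.
      - exact/RleP.
      - by apply/andP; split; apply/RleP; lra.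
    case=> [[h1 /RleP h2] /andP [/RleP h3 /RleP h4]]; split; [|split] => //.
    by move=> l i; exact: (h1 (l, i)).
  apply: closedI; [apply: closedI|].
  - exact: closed_eq_coords.
  - exact: closed_le_fun (W_cont S hA p).
  - exact: closed_coord_itv.
have [xm hxm hmin] := @topo_min R _ (Wp p S) C B x1 (W_cont S hA p) hCcl
  (fun x hx i => ltac:(case: hx => h1 [h2 h3]; apply/RleP; exact: hBd i x h1 h2 h3))
  (ltac:(split; [exact: shift_inX | split; [exact: Rle_refl | have := shift_pz x0; rewrite /x1 /pz; lra]])).
exists xm; split; first by case: hxm.
move=> y hy.
rewrite -(shift_W S hB p y).
case: (Rle_lt_dec (Wp p S (shift y)) c) => h.
  apply/RleP; apply: hmin; split; [exact: shift_inX | split => //].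
  have := shift_pz y; rewrite /pz; lra.
case: hxm => _ [h2 _]; lra.
Qed.
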